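(* Let $n\ge3$, $K\ge1$, and $\underline a=(a_1,\dots,a_K)\in(\mathbb{C}^\times)^K$ with $a_k\neq a_j^{\pm1}$ for all $k\neq j$. If $a_1=-1$ and $a_k\neq1$ for every $k\ge2$, then the image of $\psi_{\underline a}$ is isomorphic to the direct sum of one copy of $so_{2n}$ and $K-1$ copies of $sl_{2n}$.
   Context: For $n\geq 3$, $M_n=(m_{i,j})$ is the $n\times n$ integer matrix with $m_{i,i}=2$, $m_{i,i+1}=m_{i+1,i}=-1$ ($1\le i\le n-1$), $m_{1,n}=m_{n,1}=1$, all other entries $0$. $\mathrm{gim}(M_n)$ is the complex Lie algebra generated by $e_i,f_i,h_i$ ($1\le i\le n$) with relations: (R1) $[h_i,e_j]=m_{i,j}e_j$, $[h_i,f_j]=-m_{i,j}f_j$, $[e_i,f_i]=h_i$ for all $i,j$; (R2) for $i\ne j$ with $m_{i,j}\le0$: $[e_i,f_j]=0=[f_i,e_j]$, $(\mathrm{ad}\,e_i)^{1-m_{i,j}}e_j=0=(\mathrm{ad}\,f_i)^{1-m_{i,j}}f_j$; (R3) for $i\ne j$ with $m_{i,j}>0$: $[e_i,e_j]=0=[f_i,f_j]$, $(\mathrm{ad}\,e_i)^{m_{i,j}+1}f_j=0=(\mathrm{ad}\,f_i)^{m_{i,j}+1}e_j$. For $a\in\mathbb{C}^\times$, $\psi_a:\mathrm{gim}(M_n)\to sl_{2n}$ is the Lie algebra homomorphism determined by $\psi_a(e_i)=E_{i,i+1}-E_{n+i+1,n+i}$, $\psi_a(f_i)=E_{i+1,i}-E_{n+i,n+i+1}$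 ($1\le i\le n-1$), $\psi_a(e_n)=E_{n,n+1}+a^{-1}E_{1,2n}$, $\psi_a(f_n)=E_{n+1,n}+aE_{2n,1}$, where $E_{i,j}$ are matrix units. For $\underline a=(a_1,\dots,a_K)$, $\psi_{\underline a}=\bigoplus_{k=1}^K\psi_{a_k}:\mathrm{gim}(M_n)\to sl_{2n}^{\oplus K}$, $x\mapsto(\psi_{a_1}(x),\dots,\psi_{a_K}(x))$. *)

(* Defs.v *)
From HB Require Import structures.
From mathcomp Require Import all_boot all_order all_algebra.
From mathcomp Require Import reals.
From mathcomp Require Import complex.
Set Implicit Arguments. Unset Strict Implicit. Unset Printing Implicit Defensive.
Import Order.TTheory GRing.Theory Num.Theory.
Local Open Scope ring_scope.

Section Defs.
Variable (R : realType).
Local Notation C := (R[i]).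

(* The Lie algebra sl_{2n}^{\oplus K} (and gl) realised as K-tuples of
   2n x 2n complex matrices, with componentwise commutator. *)
Definition tup (K N : nat) := {ffun 'I_K -> 'M[C]_N}.

Definition lbr (K N : nat) (x y : tup K N) : tup K N :=
  [ffun k => x k *m y k - y k *m x k].

(* Matrix unit E_{i,j}, with 1-based indices i, j in {1,..,N}. *)
Definition Emx (N i j : nat) : 'M[C]_N :=
  \matrix_(r < N, c < N) ((r.+1 == i) && (c.+1 == j))%:R.

Definition psi_e (n : nat) (a : C) (i : nat) : 'M[C]_(n.*2) :=
  if (i < n)%N then Emx (n.*2) i i.+1 - Emx (n.*2) (n + i).+1 (n + i)
  else Emx (n.*2) n n.+1 + a^-1 *: Emx (n.*2) 1 (n.*2).
Definition psi_f (n : nat) (a : C) (i : nat) : 'M[C]_(n.*2) :=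
  if (i < n)%N then Emx (n.*2) i.+1 i - Emx (n.*2) (n + i) (n + i).+1
  else Emx (n.*2) n.+1 n + a *: Emx (n.*2) (n.*2) 1.
Definition psi_h (n : nat) (a : C) (i : nat) : 'M[C]_(n.*2) :=
  psi_e n a i *m psi_f n a i - psi_f n a i *m psi_e n a i.

Definition psiA_e n K (a : 'I_K -> C) (i : nat) : tup K (n.*2) :=
  [ffun k => psi_e n (a k) i].
Definition psiA_f n K (a : 'I_K -> C) (i : nat) : tup K (n.*2) :=
  [ffun k => psi_f n (a k) i].
Definition psiA_h n K (a : 'I_K -> C) (i : nat) : tup K (n.*2) :=
  [ffun k => psi_h n (a k) i].

Inductive lie_span (K N : nat) (G : tup K N -> Prop) : tup K N -> Prop :=
  | ls_gen x : G x -> lie_span G x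
  | ls_zero : lie_span G 0
  | ls_add x y : lie_span G x -> lie_span G y -> lie_span G (x + y)
  | ls_scale (c : C) x : lie_span G x -> lie_span G (c *: x)
  | ls_br x y : lie_span G x -> lie_span G y -> lie_span G (lbr x y).

(* Image of psi_{\underline a}: gim(M_n) is generated by the e_i, f_i, h_i,
   so its image is the Lie subalgebra generated by their images. *)
Definition psi_image n K (a : 'I_K -> C) : tup K (n.*2) -> Prop :=
  lie_span (fun x => exists2 i, (1 <= i <= n)%N &
      [\/ x = psiA_e n a i, x = psiA_f n a i | x = psiA_h n a i]).

Definition so_sl_sum n K : tup K (n.*2) -> Prop :=
  fun x => forall k : 'I_K,
    if val k == 0%N then (x k)^T = - x k else \tr (x k) = 0.

Definition lie_iso K N K' N' (S : tup K N -> Prop) (T : tup K' N' -> Prop) :=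
  exists f : tup K N -> tup K' N',
    [/\ forall (c : C) x y, S x -> S y -> f (c *: x + y) = c *: f x + f y,
        forall x y, S x -> S y -> f (lbr x y) = lbr (f x) (f y),
        forall x, S x -> T (f x),
        forall x y, S x -> S y -> f x = f y -> x = y
      & forall z, T z -> exists2 x, S x & f x = z].

End Defs.

(* Main.v *)
Require Import Defs.
From HB Require Import structures.
From mathcomp Require Import all_boot all_order all_algebra.
From mathcomp Require Import reals.
From mathcomp Require Import complex.
From mathcomp Require Import ring zify.
Import Order.TTheory GRing.Theory Num.Theory.
Local Open Scope ring_scope.
Set Implicit Arguments. Unset Strict Implicit. Unset Printing Implicit Defensive.

Module W.
Section Mx.
Variable R : realType.
Local Notation C := (R[i]).

Lemma emxE N i j r c : (Emx R N i j) r c = ((r.+1 == i) && (c.+1 == j))%:R.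
Proof. by rewrite mxE. Qed.

Lemma emxM_eq N i j k l : j = k -> (0 < j <= N)%N ->
  Emx R N i j *m Emx R N k l = Emx R N i l.
Proof.
move=> <- /andP[j0 jN]; apply/matrixP => r c; rewrite !mxE.
have jN' : (j.-1 < N)%N by rewrite prednK.
rewrite (bigD1 (Ordinal jN')) //= big1 ?addr0.
  rewrite !mxE /= prednK // eqxx andbT.
  by case: (r.+1 == i); case: (c.+1 == l); rewrite ?mulr1 ?mulr0 ?mul0r.
move=> s /eqP ns; rewrite !mxE.
case: (s.+1 =P j) => [hs|]; last by rewrite andbF mul0r.
exfalso; apply: ns; apply: val_inj => /=; rewrite -hs //.
Qed.

Lemma emxM_neq N i j k l : j <> k -> Emx R N i j *m Emx R N k l = 0.
Proof.
move=> jk; apply/matrixP => r c; rewrite !mxE big1 // => s _; rewrite !mxE.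
case: (s.+1 =P j) => [hj|]; last by rewrite andbF mul0r.
case: (s.+1 =P k) => [hk|]; last by rewrite mulr0.
by exfalso; apply: jk; rewrite -hj -hk.
Qed.

Definition mm N : 'M[C]_N -> 'M[C]_N -> 'M[C]_N := locked (@mulmx C N N N).
Lemma mmE N (x y : 'M[C]_N) : mm x y = x *m y. Proof. by rewrite /mm -lock. Qed.
Lemma mmDl N (x y z : 'M[C]_N) : mm (x + y) z = mm x z + mm y z.
Proof. by rewrite !mmE mulmxDl. Qed.
Lemma mmDr N (x y z : 'M[C]_N) : mm z (x + y) = mm z x + mm z y.
Proof. by rewrite !mmE mulmxDr. Qed.
Lemma mmNl N (x y : 'M[C]_N) : mm (- x) y = - mm x y.
Proof. by rewrite !mmE mulNmx. Qed.
Lemma mmNr N (x y : 'M[C]_N) : mm x (- y) = - mm x y.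
Proof. by rewrite !mmE mulmxN. Qed.
Lemma mmZl N (c : C) (x y : 'M[C]_N) : mm (c *: x) y = c *: mm x y.
Proof. by rewrite !mmE scalemxAl. Qed.
Lemma mmZr N (c : C) (x y : 'M[C]_N) : mm x (c *: y) = c *: mm x y.
Proof. by rewrite !mmE scalemxAr. Qed.
Lemma mm0l N (x : 'M[C]_N) : mm 0 x = 0. Proof. by rewrite mmE mul0mx. Qed.
Lemma mm0r N (x : 'M[C]_N) : mm x 0 = 0. Proof. by rewrite mmE mulmx0. Qed.
Definition br N (X Y : 'M[C]_N) := mm X Y - mm Y X.
End Mx.

Lemma emxM (R : realType) N i j k l :
  mm (Emx R N i j) (Emx R N k l) = ((j == k) && (0 < j <= N)%N)%:R *: Emx R N i l.
Proof.
rewrite mmE.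
case: (boolP ((j == k) && _)) => [/andP[/eqP jk jN]|h].
  by rewrite emxM_eq // scale1r.
rewrite scale0r.
case: (j =P k) => [jk|jk]; last exact: emxM_neq.
apply/matrixP => r c; rewrite !mxE big1 // => s _; rewrite !mxE.
case: (s.+1 =P j) => [hj|]; last by rewrite andbF mul0r.
by move: h; rewrite -jk eqxx /= -hj ltn_ord.
Qed.

Ltac bdec := repeat match goal with
 | |- context [(?x == ?y :> nat)] =>
   first [ rewrite (_ : (x == y) = true); last (apply/eqP; rewrite -?addnn; lia)
         | rewrite (_ : (x == y) = false); last (apply/negbTE/eqP; rewrite -?addnn; lia) ]
 | |- context [(?x <= ?y)%N] =>
   first [ rewrite (_ : (x <= y)%N = true); last (apply/idP; rewrite -?addnn; lia)
         | rewrite (_ : (x <= y)%N = false); last (apply/negbTE; rewrite -ltnNge; rewrite -?addnn; lia) ]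
 end.

Lemma sT (R : realType) N (x : 'M[R[i]]_N) : (nat_of_bool true)%:R *: x = x.
Proof. by rewrite scale1r. Qed.
Lemma sF (R : realType) N (x : 'M[R[i]]_N) : (nat_of_bool false)%:R *: x = 0.
Proof. by rewrite scale0r. Qed.

Ltac mxcomp := rewrite /br; rewrite ?(mmDl, mmDr, mmNl, mmNr, mmZl, mmZr);
   rewrite ?(emxM, mmZl, mmZr); bdec; rewrite ?andTb ?andFb ?andbT ?andbF ?sT ?sF;
   apply/matrixP => ? ?; rewrite !mxE; ring.

Section T.
Variable R : realType.
Local Notation C := (R[i]).
Variable n : nat.
Local Notation E := (Emx R (n.*2)).
Definition U p q := E p q - E (n+q) (n+p).
Definition B p q := E p (n+q).
Definition Cm p q := E (n+p) q.
Definition Bs p q := B p q - B q p.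
Definition Cs p q := Cm p q - Cm q p.
Local Notation rg p := (1 <= p <= n)%N.

Ltac go := move=> *; rewrite /U /B /Cm /Bs /Cs; mxcomp.

Lemma brUU p q s : rg p -> rg q -> rg s -> s <> p ->
  br (U p q) (U q s) = U p s.
Proof. go. Qed.

Lemma L2a (c : C) : (3 <= n)%N -> br (U 2 n) (B n 1 + c *: B 1 n) = B 2 1 + c *: B 1 2.
Proof. go. Qed.
Lemma L2b (c : C) : (3 <= n)%N -> br (U 1 2) (B 2 1 + c *: B 1 2) = (1+c) *: B 1 1.
Proof. go. Qed.
Lemma L3a (c : C) : (3 <= n)%N -> br (U n 2) (Cm 1 n + c *: Cm n 1) = - (Cm 1 2 + c *: Cm 2 1).
Proof. go. Qed.
Lemma L3b (c : C) : (3 <= n)%N -> br (U 2 1) (- (Cm 1 2 + c *: Cm 2 1)) = (1+c) *: Cm 1 1.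
Proof. go. Qed.
Lemma L4 (c : C) : (3 <= n)%N -> 2%:R *: (B n 1 + c *: B 1 n) - (1+c) *: br (U n 1) (B 1 1) = (1-c) *: Bs n 1.
Proof. go. Qed.
Lemma L5a : (3 <= n)%N -> br (B 1 1) (Cm 1 1) = E 1 1 - E (n+1) (n+1).
Proof. go. Qed.
Lemma L5b : (3 <= n)%N -> br (E 1 1 - E (n+1) (n+1)) (B 1 1) = 2%:R *: B 1 1.
Proof. go. Qed.
Lemma L6a : (3 <= n)%N -> br (Bs n 1) (Cm 1 1) = E n 1 + E (n+1) (n+n).
Proof. go. Qed.
Lemma L6b : (3 <= n)%N -> br (E n 1 + E (n+1) (n+n)) (B 1 1) = Bs n 1.
Proof. go. Qed.
Lemma L7 : (3 <= n)%N -> br (E 1 1 - E (n+1) (n+1)) (Cm 1 1) = - 2%:R *: Cm 1 1.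
Proof. go. Qed.
Lemma L8 p : rg p -> p <> 1%N -> br (U p 1) (B 1 1) = B p 1 + B 1 p.
Proof. go. Qed.
Lemma L9 p q : rg p -> rg q -> p <> 1%N -> q <> 1%N -> br (U q 1) (B p 1 + B 1 p) = B p q + B q p.
Proof. go. Qed.
Lemma L10 p : rg p -> p <> 1%N -> br (U 1 p) (Cm 1 1) = - (Cm p 1 + Cm 1 p).
Proof. go. Qed.
Lemma L11 p q : rg p -> rg q -> p <> 1%N -> q <> 1%N -> br (U 1 q) (Cm p 1 + Cm 1 p) = - (Cm p q + Cm q p).
Proof. go. Qed.
Lemma L12 p m : rg p -> rg m -> p <> 1%N -> p <> m -> m <> 1%N -> br (U p m) (Bs m 1) = Bs p 1.
Proof. go. Qed.
Lemma L13 p q : rg p -> rg q -> p <> 1%N -> q <> 1%N -> br (U q 1) (Bs p 1) = Bs p q.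
Proof. go. Qed.
Lemma L14 r m : rg r -> rg m -> r <> 1%N -> r <> m -> m <> 1%N -> br (U 1 r) (Cs 1 m) = - Cs r m.
Proof. go. Qed.
Lemma L15 p q m : rg p -> rg q -> rg m -> p <> m -> q <> m -> br (U m q) (Cs p m) = - Cs p q.
Proof. go. Qed.
Lemma L16 p : rg p -> p <> 1%N -> br (B p 1) (Cm 1 1) = E p 1.
Proof. go. Qed.
Lemma L17 p s : rg p -> rg s -> p <> 1%N -> s <> 1%N -> p <> s -> br (U 1 s) (E p 1) = - E p s.
Proof. go. Qed.
Lemma L18 p s : rg p -> rg s -> p <> 1%N -> s <> p -> s <> 1%N -> br (U 1 p) (E p s) = E 1 s.
Proof. go. Qed.
Lemma L19 r v w : rg r -> rg v -> rg w -> r <> v -> r <> w -> br (E r v) (Cm r w + Cm w r) = - Cm w v.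
Proof. go. Qed.
Lemma L20 p q : rg p -> rg q -> p <> q -> br (Cm p 1) (B 1 q) = E (n+p) (n+q).
Proof. go. Qed.
Lemma L21 p q : rg p -> rg q -> p <> q ->
  br (U p q) (U q p) + br (Bs p q) (Cs q p) = 2%:R *: (E p p - E (n+p) (n+p)).
Proof. go. Qed.
Lemma L22 i j : (1 <= i <= n.*2)%N -> (1 <= j <= n.*2)%N -> i <> j -> br (E i j) (E j i) = E i i - E j j.
Proof. go. Qed.
End T.

End W.
Import W.

Section Main.
Variable R : realType.
Local Notation C := (R[i]).
Variables (n K : nat) (a : 'I_K -> C).
Hypothesis n3 : (3 <= n)%N.
Local Notation N := (n.*2).
Local Notation E := (Emx R N).
Local Notation U := (U R n).
Local Notation B := (B R n).
Local Notation Cm := (Cm R n).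
Local Notation Bs := (Bs R n).
Local Notation Cs := (Cs R n).
Local Notation rg p := (1 <= p <= n)%N.

Definition inL (F : 'I_K -> 'M[C]_N) := psi_image a [ffun k => F k].

Lemma inL_ext F G : (forall k, F k = G k) -> inL F -> inL G.
Proof.
move=> h; rewrite /inL (_ : [ffun k => G k] = [ffun k => F k]) //.
by apply/ffunP => k; rewrite !ffunE h.
Qed.

Lemma inL0 : inL (fun _ => 0).
Proof.
rewrite /inL (_ : [ffun _ => 0] = 0); first exact: ls_zero.
by apply/ffunP => k; rewrite !ffunE.
Qed.

Lemma inL_add F G : inL F -> inL G -> inL (fun k => F k + G k).
Proof.
move=> hF hG; rewrite /inL (_ : [ffun k => F k + G k] = [ffun k => F k] + [ffun k => G k]).
  exact: ls_add.
by apply/ffunP => k; rewrite !ffunE.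
Qed.

Lemma inL_scale c F : inL F -> inL (fun k => c *: F k).
Proof.
move=> hF; rewrite /inL (_ : [ffun k => c *: F k] = c *: [ffun k => F k]).
  exact: ls_scale.
by apply/ffunP => k; rewrite !ffunE.
Qed.

Lemma inL_br F G : inL F -> inL G -> inL (fun k => br (F k) (G k)).
Proof.
move=> hF hG; rewrite /inL (_ : [ffun k => br (F k) (G k)] = lbr [ffun k => F k] [ffun k => G k]).
  exact: ls_br.
by apply/ffunP => k; rewrite !ffunE /br !mmE.
Qed.

Lemma inL_e i : (1 <= i <= n)%N -> inL (fun k => psi_e n (a k) i).
Proof. by move=> hi; apply: ls_gen; exists i => //; apply: Or31. Qed.
Lemma inL_f i : (1 <= i <= n)%N -> inL (fun k => psi_f n (a k) i).
Proof. by move=> hi; apply: ls_gen; exists i => //; apply: Or32. Qed.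

Lemma psi_eU c i : (i < n)%N -> psi_e n c i = U i i.+1.
Proof. by move=> h; rewrite /psi_e h /W.U addnS. Qed.
Lemma psi_fU c i : (i < n)%N -> psi_f n c i = U i.+1 i.
Proof. by move=> h; rewrite /psi_f h /W.U addnS. Qed.
Lemma psi_en c : psi_e n c n = B n 1 + c^-1 *: B 1 n.
Proof. by rewrite /psi_e ltnn /W.B addn1 addnn. Qed.
Lemma psi_fn c : psi_f n c n = Cm 1 n + c *: Cm n 1.
Proof. by rewrite /psi_f ltnn /W.Cm addn1 addnn. Qed.

Lemma inLU_up d p : (1 <= p)%N -> (p + d.+1 <= n)%N -> inL (fun _ => U p (p + d.+1)).
Proof.
elim: d p => [|d IH] p p1 hp.
  apply: inL_ext (inL_e (i := p) _); last by apply/andP; split => //; lia.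
  by move=> k; rewrite psi_eU ?addn1 //; lia.
have h1 := IH p p1 ltac:(lia).
have h2 := @inL_e (p + d.+1) ltac:(apply/andP; split; lia).
apply: inL_ext (inL_br h1 h2) => k. rewrite psi_eU; last lia.
rewrite brUU; last lia; try (apply/andP; split; lia); congr (W.U _ _ _ _); lia.
Qed.

Lemma inLU_down d q : (1 <= q)%N -> (q + d.+1 <= n)%N -> inL (fun _ => U (q + d.+1) q).
Proof.
elim: d q => [|d IH] q q1 hq.
  apply: inL_ext (inL_f (i := q) _); last by apply/andP; split => //; lia.
  by move=> k; rewrite psi_fU ?addn1 //; lia.
have h1 := IH q.+1 isT ltac:(lia).
have h2 := @inL_f q ltac:(apply/andP; split; lia).
apply: inL_ext (inL_br h1 h2) => k. rewrite psi_fU; last lia.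
rewrite brUU; last lia; try (apply/andP; split; lia); congr (W.U _ _ _ _); lia.
Qed.

Lemma inLU p q : rg p -> rg q -> p <> q -> inL (fun _ => U p q).
Proof.
move=> /andP[p1 pn] /andP[q1 qn] pq.
case: (ltngtP p q) => h; last by [].
  have := @inLU_up (q - p).-1 p p1 ltac:(lia).
  by rewrite (_ : p + (q - p).-1.+1 = q)%N //; lia.
have := @inLU_down (p - q).-1 q q1 ltac:(lia).
by rewrite (_ : q + (p - q).-1.+1 = p)%N //; lia.
Qed.


Lemma br0l (X : 'M[C]_N) : br 0 X = 0.
Proof. by rewrite /br mm0l mm0r subrr. Qed.
Lemma br0r (X : 'M[C]_N) : br X 0 = 0.
Proof. by rewrite /br mm0l mm0r subrr. Qed.
Lemma brZl (c : C) (X Y : 'M[C]_N) : br (c *: X) Y = c *: br X Y.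
Proof. by rewrite /br mmZl mmZr scalerBr. Qed.
Lemma brZr (c : C) (X Y : 'M[C]_N) : br X (c *: Y) = c *: br X Y.
Proof. by rewrite /br mmZl mmZr scalerBr. Qed.
Lemma brDl (X Y Z : 'M[C]_N) : br (X + Y) Z = br X Z + br Y Z.
Proof. by rewrite /br mmDl mmDr opprD addrACA. Qed.
Lemma brDr (X Y Z : 'M[C]_N) : br Z (X + Y) = br Z X + br Z Y.
Proof. by rewrite /br mmDl mmDr opprD addrACA. Qed.
Lemma brNl (X Y : 'M[C]_N) : br (- X) Y = - br X Y.
Proof. by rewrite -scaleN1r brZl scaleN1r. Qed.
Lemma brNr (X Y : 'M[C]_N) : br X (- Y) = - br X Y.
Proof. by rewrite -scaleN1r brZr scaleN1r. Qed.
Lemma brBl (X Y Z : 'M[C]_N) : br (X - Y) Z = br X Z - br Y Z.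
Proof. by rewrite brDl brNl. Qed.
Lemma brBr (X Y Z : 'M[C]_N) : br Z (X - Y) = br Z X - br Z Y.
Proof. by rewrite brDr brNr. Qed.
Lemma brC (X Y : 'M[C]_N) : br X Y = - br Y X.
Proof. by rewrite /br opprB. Qed.

Definition D (k : 'I_K) (X : 'M[C]_N) := fun j : 'I_K => if j == k then X else 0.
Definition V k X := inL (D k X).

Lemma V_ext k X Y : X = Y -> V k X -> V k Y.
Proof. by move=> ->. Qed.
Lemma V0 k : V k 0.
Proof. by apply: inL_ext inL0 => j; rewrite /D; case: ifP. Qed.
Lemma V_add k X Y : V k X -> V k Y -> V k (X + Y).
Proof. by move=> h1 h2; apply: inL_ext (inL_add h1 h2) => j; rewrite /D; case: ifP; rewrite ?addr0. Qed.
Lemma V_scale k c X : V k X -> V k (c *: X).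
Proof. by move=> h1; apply: inL_ext (inL_scale c h1) => j; rewrite /D; case: ifP; rewrite ?scaler0. Qed.
Lemma V_opp k X : V k X -> V k (- X).
Proof. by move=> h; rewrite -scaleN1r; apply: V_scale. Qed.
Lemma V_sub k X Y : V k X -> V k Y -> V k (X - Y).
Proof. by move=> h1 h2; apply: V_add => //; apply: V_opp. Qed.
Lemma V_brL k G X : inL G -> V k X -> V k (br (G k) X).
Proof.
move=> h1 h2; apply: inL_ext (inL_br h1 h2) => j; rewrite /D.
by case: (j =P k) => [->|_]; rewrite ?br0r.
Qed.
Lemma V_brR k G X : V k X -> inL G -> V k (br X (G k)).
Proof.
move=> h1 h2; apply: inL_ext (inL_br h1 h2) => j; rewrite /D.
by case: (j =P k) => [->|_]; rewrite ?br0l.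
Qed.
Lemma V_brc k Y X : inL (fun _ => Y) -> V k X -> V k (br Y X).
Proof. exact: (@V_brL k (fun _ => Y)). Qed.
Lemma V_br k X Y : V k X -> V k Y -> V k (br X Y).
Proof.
move=> h1 h2; apply: inL_ext (inL_br h1 h2) => j; rewrite /D.
by case: ifP; rewrite ?br0l.
Qed.
Lemma V_U k p q X : rg p -> rg q -> p <> q -> V k X -> V k (br (U p q) X).
Proof. by move=> hp hq pq; apply: V_brc; apply: inLU. Qed.

Lemma sep X (phi u : 'I_K -> C) :
  inL (fun k => phi k *: X) ->
  (forall psi, inL (fun k => psi k *: X) -> inL (fun k => (u k * psi k) *: X)) ->
  forall s, inL (fun k => (phi k * \prod_(j <- s) (u k - u j)) *: X).
Proof.
move=> h0 hop; elim => [|j s IH].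
  by apply: inL_ext h0 => k; rewrite big_nil mulr1.
apply: inL_ext (inL_add (hop _ IH) (inL_scale (- u j) IH)) => k.
rewrite big_cons scalerA -scalerDl; congr (_ *: _); ring.
Qed.

Lemma sepV X (phi u : 'I_K -> C) k :
  inL (fun k => phi k *: X) ->
  (forall psi, inL (fun k => psi k *: X) -> inL (fun k => (u k * psi k) *: X)) ->
  phi k != 0 -> (forall j, j != k -> u k != u j) -> V k X.
Proof.
move=> h0 hop hk hu.
pose P := fun k0 : 'I_K => \prod_(j <- [seq j <- enum 'I_K | j != k]) (u k0 - u j).
have : inL (fun k => (phi k * P k) *: X) by exact: sep.
have Pk : P k != 0.
  rewrite /P prodf_seq_neq0; apply/allP => j; rewrite mem_filter => /andP[jk _].
  by rewrite subr_eq0; apply: hu.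
move=> h; apply: inL_ext (inL_scale (phi k * P k)^-1 h) => j; rewrite /D.
case: (j =P k) => [->|/eqP jk].
  by rewrite scalerA mulVf ?scale1r // mulf_neq0.
suff -> : P j = 0 by rewrite mulr0 scale0r scaler0.
apply/eqP; rewrite /P prodf_seq_eq0; apply/hasP; exists j.
  by rewrite mem_filter jk mem_enum.
by rewrite /= subrr eqxx.
Qed.

Hypothesis hK : (1 <= K)%N.
Hypothesis ha0 : forall k, a k != 0.
Hypothesis hdist : forall k j : 'I_K, k != j -> a k != a j /\ a k != (a j)^-1.
Hypothesis hm1 : forall k : 'I_K, val k = 0%N -> a k = -1.
Hypothesis hne1 : forall k : 'I_K, val k <> 0%N -> a k != 1.

Lemma rg1 : rg 1. Proof. by apply/andP; split => //; lia. Qed.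
Lemma rg2 : rg 2. Proof. by apply/andP; split => //; lia. Qed.
Lemma rgn : rg n. Proof. by apply/andP; split => //; lia. Qed.

Lemma beta : inL (fun k => (1 + (a k)^-1) *: B 1 1).
Proof.
have h := inL_br (inLU rg1 rg2 ltac:(lia)) (inL_br (inLU rg2 rgn ltac:(lia)) (inL_e rgn)).
by apply: inL_ext h => k; rewrite psi_en L2a // L2b.
Qed.

Lemma gamma : inL (fun k => (1 + a k) *: Cm 1 1).
Proof.
have h := inL_br (inLU rg2 rg1 ltac:(lia)) (inL_br (inLU rgn rg2 ltac:(lia)) (inL_f rgn)).
by apply: inL_ext h => k; rewrite psi_fn L3a // L3b.
Qed.

Lemma opB psi : inL (fun k => psi k *: B 1 1) ->
  inL (fun k => (2%:R * (1 + a k) * (1 + (a k)^-1) * psi k) *: B 1 1).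
Proof.
move=> h; apply: inL_ext (inL_br (inL_br h gamma) beta) => k.
rewrite ?(brZl, brZr) L5a // L5b // !scalerA; congr (_ *: _); ring.
Qed.

Lemma opBs psi : inL (fun k => psi k *: Bs n 1) ->
  inL (fun k => ((1 + a k) * (1 + (a k)^-1) * psi k) *: Bs n 1).
Proof.
move=> h; apply: inL_ext (inL_br (inL_br h gamma) beta) => k.
rewrite ?(brZl, brZr) L6a // L6b // !scalerA; congr (_ *: _); ring.
Qed.

Lemma inBs : inL (fun k => (1 - (a k)^-1) *: Bs n 1).
Proof.
have h := inL_add (inL_scale 2%:R (inL_e rgn)) (inL_scale (-1) (inL_br (inLU rgn rg1 ltac:(lia)) beta)).
apply: inL_ext h => k; rewrite psi_en brZr scaleN1r -L4 //.
Qed.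

Lemma udist j k : j != k -> (1 + a k) * (1 + (a k)^-1) != (1 + a j) * (1 + (a j)^-1).
Proof.
move=> jk; have [h1 h2] := hdist jk.
have aj := ha0 j; have ak := ha0 k.
apply/negP => /eqP h.
have : (a j - a k) * (a j * a k - 1) = 0.
  have e1 : (1 + a k) * (1 + (a k)^-1) = 2%:R + a k + (a k)^-1.
    by rewrite mulrDr !mulrDl !mul1r !mulr1 mulfV //; ring.
  have e2 : (1 + a j) * (1 + (a j)^-1) = 2%:R + a j + (a j)^-1.
    by rewrite mulrDr !mulrDl !mul1r !mulr1 mulfV //; ring.
  move: h; rewrite e1 e2 => h.
  have -> : (a j - a k) * (a j * a k - 1) = a j * a k * ((2%:R + a j + (a j)^-1) - (2%:R + a k + (a k)^-1)).
    rewrite (_ : a j * a k * ((2%:R + a j + (a j)^-1) - (2%:R + a k + (a k)^-1)) =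
       a j * a k * (a j - a k) + a k * (a j * (a j)^-1) - a j * (a k * (a k)^-1)); last by ring.
    by rewrite !mulfV //; ring.
  by rewrite -h subrr mulr0.
move/eqP; rewrite mulf_eq0 => /orP[]; rewrite subr_eq0 => /eqP h3.
  by move: h1; rewrite h3 eqxx.
move: h2; rewrite (_ : a j = (a k)^-1) ?eqxx //.
by apply: (mulIf ak); rewrite h3 mulVf.
Qed.

Definition k0 : 'I_K := Ordinal hK.

Lemma a_neq_m1 k : val k <> 0%N -> a k != -1.
Proof.
move=> hk; have kk0 : k != k0 by apply/eqP => e; apply: hk; rewrite e.
have [h _] := hdist kk0. by rewrite (hm1 (k := k0)) in h.
Qed.

Lemma VB11 k : val k <> 0%N -> V k (B 1 1).
Proof.
move=> hk; apply: (@sepV _ (fun k => 1 + (a k)^-1) (fun k => 2%:R * (1 + a k) * (1 + (a k)^-1)) k beta).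
- by move=> psi h; apply: inL_ext (opB h) => j.
- rewrite addr_eq0; apply/eqP => e.
  have e' : (a k)^-1 = -1 by rewrite -[(a k)^-1]opprK -e.
  by move/negP: (a_neq_m1 hk); apply; rewrite -[a k]invrK e' invrN1.
- move=> j jk; rewrite -!mulrA; apply/negP => /eqP /(mulfI _) e.
  by move/negP: (udist jk); apply; rewrite e ?pnatr_eq0.
Qed.

Lemma VBs k : val k <> 0%N -> V k (Bs n 1).
Proof.
move=> hk; apply: (@sepV _ (fun k => 1 - (a k)^-1) (fun k => (1 + a k) * (1 + (a k)^-1)) k inBs).
- by move=> psi h; apply: inL_ext (opBs h) => j.
- rewrite subr_eq0; apply/eqP => e.
  by move/negP: (hne1 hk); apply; rewrite -[a k]invrK -e invr1.
- by move=> j jk; apply: udist.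
Qed.

Lemma VC11 k : val k <> 0%N -> V k (Cm 1 1).
Proof.
move=> hk; have h := V_brR (V_brR (VB11 hk) gamma) gamma.
have nz : (1 + a k) ^+ 2 * (- 2%:R) != 0.
  rewrite mulf_neq0 // ?expf_neq0 ?oppr_eq0 ?pnatr_eq0 //.
  by rewrite addrC addr_eq0; apply: a_neq_m1.
apply: V_ext (V_scale ((1 + a k) ^+ 2 * (- 2%:R))^-1 h).
rewrite ?(brZl, brZr) L5a // L7 // !scalerA.
rewrite -!mulrA (_ : (1 + a k) * ((1 + a k) * -2%:R) = (1 + a k) ^+ 2 * (- 2%:R)); last by ring.
by rewrite mulVf // scale1r.
Qed.

Ltac sside := first [exact: rg1 | exact: rgn | exact: rg2 | done | lia].
Ltac vU := apply: V_U; try sside.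

Lemma pick3 x y : rg x -> rg y -> exists r, [/\ rg r, r <> x & r <> y].
Proof.
move=> hx hy.
case: (x =P 1%N) => [->|x1].
  case: (y =P 2%N) => [->|y2].
    by exists 3%N; split; [apply/andP; split; lia|lia|lia].
  by exists 2%N; split; [exact: rg2|lia|lia].
case: (y =P 1%N) => [->|y1].
  case: (x =P 2%N) => [->|x2].
    by exists 3%N; split; [apply/andP; split; lia|lia|lia].
  by exists 2%N; split; [exact: rg2|lia|lia].
by exists 1%N; split; [exact: rg1|lia|lia].
Qed.

Lemma Bsym_all k : V k (B 1 1) -> forall p q, rg p -> rg q -> V k (B p q + B q p).
Proof.
move=> h p q hp hq.
case: (p =P 1%N) => [->|p1]; case: (q =P 1%N) => [->|q1].
- exact: V_add.
- by rewrite addrC -L8 //; vU.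
- by rewrite -L8; try sside; vU.
- rewrite -L9; try sside; vU.
  by rewrite -L8; try sside; vU.
Qed.

Lemma Bs_p1 k : V k (Bs n 1) -> forall p, rg p -> V k (Bs p 1).
Proof.
move=> h p hp; case: (p =P 1%N) => [->|p1].
  by rewrite /W.Bs subrr; apply: V0.
case: (p =P n) => [->//|pn].
rewrite -(@L12 _ _ p n); try sside.
vU.
Qed.

Lemma Bs_all k : V k (Bs n 1) -> forall p q, rg p -> rg q -> V k (Bs p q).
Proof.
move=> h p q hp hq.
case: (q =P 1%N) => [->|q1]; first exact: Bs_p1.
case: (p =P 1%N) => [->|p1].
  by rewrite /W.Bs -opprB; apply: V_opp; apply: Bs_p1.
rewrite -L13; try sside; vU.
exact: Bs_p1.
Qed.

Lemma B_all k : V k (B 1 1) -> V k (Bs n 1) -> forall p q, rg p -> rg q -> V k (B p q).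
Proof.
move=> h1 h2 p q hp hq.
have := V_scale (2%:R^-1) (V_add (Bsym_all h1 hp hq) (Bs_all h2 hp hq)).
apply: V_ext; rewrite /W.Bs addrACA subrr addr0.
rewrite (_ : B p q + B p q = 2%:R *: B p q); last by rewrite scaler_nat mulr2n.
by rewrite scalerA mulVf ?scale1r // pnatr_eq0.
Qed.

Lemma Csym_all k : V k (Cm 1 1) -> forall p q, rg p -> rg q -> V k (Cm p q + Cm q p).
Proof.
move=> h p q hp hq.
have hp1 p' : rg p' -> p' <> 1%N -> V k (Cm p' 1 + Cm 1 p').
  move=> hp' p1; rewrite -[_ + _]opprK -L10; try sside; apply: V_opp; vU.
case: (p =P 1%N) => [->|p1]; case: (q =P 1%N) => [->|q1].
- exact: V_add.
- by rewrite addrC; apply: hp1.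
- by apply: hp1.
- rewrite -[_ + _]opprK -L11; try sside; apply: V_opp; vU.
  exact: hp1.
Qed.

Lemma Cs_pn k : V k (Cs 1 n) -> forall p, rg p -> V k (Cs p n).
Proof.
move=> h p hp; case: (p =P 1%N) => [->//|p1].
case: (p =P n) => [->|pn]; first by rewrite /W.Cs subrr; apply: V0.
rewrite -[Cs p n]opprK -(@L14 _ _ p n); try sside.
apply: V_opp; vU.
Qed.

Lemma Cs_all k : V k (Cs 1 n) -> forall p q, rg p -> rg q -> V k (Cs p q).
Proof.
move=> h p q hp hq.
case: (q =P n) => [->|qn]; first exact: Cs_pn.
case: (p =P n) => [->|pn].
  by rewrite /W.Cs -opprB; apply: V_opp; apply: Cs_pn.
rewrite -[Cs p q]opprK -(@L15 _ _ p q n); try sside.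
apply: V_opp; vU.
exact: Cs_pn.
Qed.

Lemma E_all k : V k (B 1 1) -> V k (Bs n 1) -> V k (Cm 1 1) ->
  forall p s, rg p -> rg s -> p <> s -> V k (E p s).
Proof.
move=> h1 h2 h3.
have Ep1 p : rg p -> p <> 1%N -> V k (E p 1).
  move=> hp p1; rewrite -L16; try sside; apply: V_br => //; apply: B_all; try sside.
move=> p s hp hs ps.
case: (s =P 1%N) => [e|s1]; first by subst s; apply: Ep1.
case: (p =P 1%N) => [->|p1].
  have [r [hr r1 rs]] := pick3 rg1 hs.
  rewrite -(@L18 _ _ r s); try sside; vU.
  rewrite -[E r s]opprK -(@L17 _ _ r s); try sside; apply: V_opp; vU.
  by apply: Ep1.
rewrite -[E p s]opprK -(@L17 _ _ p s); try sside; apply: V_opp; vU.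
by apply: Ep1.
Qed.

Lemma Cm_all k : V k (B 1 1) -> V k (Bs n 1) -> V k (Cm 1 1) ->
  forall w v, rg w -> rg v -> V k (Cm w v).
Proof.
move=> h1 h2 h3 w v hw hv.
have [r [hr rv rw]] := pick3 hv hw.
rewrite -[Cm w v]opprK -(@L19 _ _ r v w); try sside; apply: V_opp; apply: V_br.
  by apply: E_all.
by apply: Csym_all.
Qed.

Lemma Eoff k : V k (B 1 1) -> V k (Bs n 1) -> V k (Cm 1 1) ->
  forall i j, (1 <= i <= N)%N -> (1 <= j <= N)%N -> i <> j -> V k (E i j).
Proof.
move=> h1 h2 h3 i j hi hj ij.
have hN : N = (n + n)%N by rewrite addnn.
case: (leqP i n) => hin; case: (leqP j n) => hjn.
- by apply: E_all => //; apply/andP; split; lia.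
- have -> : j = (n + (j - n))%N by lia.
  by apply: (@B_all k h1 h2 i (j - n)); apply/andP; split; lia.
- have -> : i = (n + (i - n))%N by lia.
  by apply: (@Cm_all k h1 h2 h3 (i - n) j); apply/andP; split; lia.
- have -> : i = (n + (i - n))%N by lia.
  have -> : j = (n + (j - n))%N by lia.
  rewrite -(@L20 _ _ (i - n) (j - n)); [|apply/andP; split; lia..|lia].
  apply: V_br; first by apply: Cm_all => //; [apply/andP; split; lia| exact: rg1].
  by apply: B_all => //; [exact: rg1|apply/andP; split; lia].
Qed.

Lemma V_sum k (I : finType) (P : pred I) (f : I -> 'M[C]_N) :
  (forall i, P i -> V k (f i)) -> V k (\sum_(i | P i) f i).
Proof. move=> h; apply: big_ind => //; [exact: V0 | exact: V_add]. Qed.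

Lemma emx_basis (X : 'M[C]_N) :
  X = \sum_(r < N) \sum_(c < N) X r c *: E r.+1 c.+1.
Proof.
rewrite {1}(matrix_sum_delta X); apply: eq_bigr => r _; apply: eq_bigr => c _.
congr (_ *: _); apply/matrixP => i j; rewrite !mxE.
by rewrite !eqSS.
Qed.

Lemma seeds k : val k <> 0%N -> [/\ V k (B 1 1), V k (Bs n 1) & V k (Cm 1 1)].
Proof. by move=> hk; split; [apply: VB11 | apply: VBs | apply: VC11]. Qed.

Lemma Eoff' k : val k <> 0%N ->
  forall i j, (1 <= i <= N)%N -> (1 <= j <= N)%N -> i <> j -> V k (E i j).
Proof. by move=> hk; have [h1 h2 h3] := seeds hk; apply: Eoff. Qed.

Lemma sl_span k X : val k <> 0%N -> \tr X = 0 -> V k X.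
Proof.
move=> hk htr.
pose F (r c : 'I_N) := if r == c then E r.+1 r.+1 - E 1 1 else E r.+1 c.+1.
have -> : X = \sum_(r < N) \sum_(c < N) X r c *: F r c.
  have e1 : forall r c : 'I_N, X r c *: F r c =
      X r c *: E r.+1 c.+1 - (if r == c then X r c else 0) *: E 1 1.
    move=> r c; rewrite /F; case: (r =P c) => [->|_]; last by rewrite scale0r subr0.
    by rewrite scalerBr.
  under eq_bigr do under eq_bigr do rewrite e1.
  under eq_bigr do rewrite sumrB.
  rewrite sumrB -emx_basis.
  have -> : \sum_(r < N) \sum_(c < N) (if r == c then X r c else 0) *: E 1 1 = 0.
    under eq_bigr do rewrite -scaler_suml.
    rewrite -scaler_suml.
    have -> : \sum_(r < N) \sum_(c < N) (if r == c then X r c else 0) = \tr X.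
      rewrite /mxtrace; apply: eq_bigr => r _.
      rewrite (bigD1 r) //= eqxx big1 ?addr0 // => c.
      by rewrite eq_sym => /negbTE ->.
    by rewrite htr scale0r.
  by rewrite subr0.
apply: V_sum => r _; apply: V_sum => c _; apply: V_scale.
have hN : N = (n + n)%N by rewrite addnn.
have hr := ltn_ord r; have hc := ltn_ord c.
rewrite /F; case: (r =P c) => [_|rc].
  case: (r =P 0%N :> nat) => [r0|r0].
    by rewrite r0 subrr; apply: V0.
  rewrite -(@L22 _ _ r.+1 1); try (apply/andP; split); try lia.
  by apply: V_br; apply: Eoff' => //; try (apply/andP; split); lia.
apply: Eoff' => //; try (apply/andP; split); try lia.
by move=> [] /val_inj.
Qed.

Lemma inL_sumseq (P : pred 'I_K) (G : 'I_K -> 'I_K -> 'M[C]_N) s :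
  (forall k, P k -> inL (G k)) -> inL (fun j => \sum_(k <- s | P k) G k j).
Proof.
move=> h; elim: s => [|x s IH].
  by apply: inL_ext inL0 => j; rewrite big_nil.
case hx: (P x).
  by apply: inL_ext (inL_add (h x hx) IH) => j; rewrite big_cons hx.
by apply: inL_ext IH => j; rewrite big_cons hx.
Qed.

Lemma neq_k0 k : k != k0 -> val k <> 0%N.
Proof. by move=> h e; move/eqP: h; apply; apply: val_inj. Qed.

Lemma sub0 F : inL F -> (forall k, k != k0 -> V k (F k)) -> V k0 (F k0).
Proof.
move=> hF hV.
have hs := @inL_sumseq (fun k => k != k0) (fun k => D k (F k)) (index_enum _) hV.
apply: inL_ext (inL_add hF (inL_scale (-1) hs)) => j; rewrite scaleN1r /D.
case: (j =P k0) => [->|/eqP jk].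
  rewrite big1 ?oppr0 ?addr0 // => k kk0.
  by rewrite eq_sym (negbTE kk0).
rewrite (bigD1 j) //= eqxx big1 ?addr0 ?subrr // => k /andP[_ kj].
by rewrite eq_sym (negbTE kj).
Qed.

Lemma V0U p q : rg p -> rg q -> p <> q -> V k0 (U p q).
Proof.
move=> hp hq pq; apply: (@sub0 (fun _ => U p q)); first exact: inLU.
move=> k /neq_k0 hk; have hN : N = (n + n)%N by rewrite addnn.
by apply: V_sub; apply: Eoff' => //; try (apply/andP; split); lia.
Qed.

Lemma V0Bs : V k0 (Bs n 1).
Proof.
have h := @sub0 (fun k => psi_e n (a k) n) (inL_e rgn).
have hN : N = (n + n)%N by rewrite addnn.
apply: V_ext (h _); first by rewrite psi_en hm1 // invrN1 scaleN1r.
move=> k /neq_k0 hk; rewrite psi_en; apply: V_add; last apply: V_scale;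
  by apply: Eoff' => //; try (apply/andP; split); lia.
Qed.

Lemma V0Cs : V k0 (Cs 1 n).
Proof.
have h := @sub0 (fun k => psi_f n (a k) n) (inL_f rgn).
have hN : N = (n + n)%N by rewrite addnn.
apply: V_ext (h _); first by rewrite psi_fn hm1 // scaleN1r.
move=> k /neq_k0 hk; rewrite psi_fn; apply: V_add; last apply: V_scale;
  by apply: Eoff' => //; try (apply/andP; split); lia.
Qed.

Lemma V0W p : rg p -> V k0 (E p p - E (n+p) (n+p)).
Proof.
move=> hp; have [q [hq qp _]] := pick3 hp hp.
have h := V_scale (2%:R^-1) (V_add (V_br (V0U hp hq (nesym qp)) (V0U hq hp qp))
   (V_br (Bs_all V0Bs hp hq) (Cs_all V0Cs hq hp))).
apply: V_ext h; rewrite L21 //; last by apply: nesym.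
by rewrite scalerA mulVf ?scale1r // pnatr_eq0.
Qed.

Definition sg (i : nat) : nat := if (i <= n)%N then (i + n)%N else (i - n)%N.
Lemma sg_lo i : (i <= n)%N -> sg i = (i + n)%N.
Proof. by rewrite /sg => ->. Qed.
Lemma sg_hi i : (n < i)%N -> sg i = (i - n)%N.
Proof. by move=> h; rewrite /sg leqNgt h. Qed.

Lemma VW i j : (1 <= i <= N)%N -> (1 <= j <= N)%N -> V k0 (E i j - E (sg j) (sg i)).
Proof.
have hN : N = (n + n)%N by rewrite addnn.
move=> hi hj.
case: (leqP i n) => hin; case: (leqP j n) => hjn.
- rewrite sg_lo // sg_lo // addnC [(i + n)%N]addnC.
  case: (i =P j) => [<-|ij]; first by apply: V0W; apply/andP; split; lia.
  by apply: V0U => //; apply/andP; split; lia.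
- rewrite sg_hi // sg_lo // [(i + n)%N]addnC.
  have -> : j = (n + (j - n))%N by lia.
  rewrite (_ : (n + (j - n) - n)%N = (j - n)%N); last by lia.
  have h : V k0 (Bs i (j - n)) by apply: (Bs_all V0Bs); apply/andP; split; lia.
  by move: h; rewrite /W.Bs /W.B.
- rewrite sg_lo // sg_hi // addnC.
  have -> : i = (n + (i - n))%N by lia.
  rewrite (_ : (n + (i - n) - n)%N = (i - n)%N); last by lia.
  have h : V k0 (Cs (i - n) j) by apply: (Cs_all V0Cs); apply/andP; split; lia.
  by move: h; rewrite /W.Cs /W.Cm.
- rewrite sg_hi // sg_hi //.
  have -> : i = (n + (i - n))%N by lia.
  have -> : j = (n + (j - n))%N by lia.
  rewrite (_ : (n + (i - n) - n)%N = (i - n)%N); last by lia.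
  rewrite (_ : (n + (j - n) - n)%N = (j - n)%N); last by lia.
  rewrite -opprB; apply: V_opp.
  case: (i - n =P j - n)%N => [<-|ij]; first by apply: V0W; apply/andP; split; lia.
  by apply: V0U => //; [apply/andP; split; lia|apply/andP; split; lia|lia].
Qed.

Lemma sg_lt (r : 'I_N) : ((sg r.+1).-1 < N)%N.
Proof. have hN : N = (n + n)%N by rewrite addnn. have := ltn_ord r; rewrite /sg; case: ifP => h; lia. Qed.
Definition sig (r : 'I_N) : 'I_N := Ordinal (sg_lt r).

Lemma sg_eq (i c : 'I_N) : (i.+1 == sg c.+1) = (c == sig i).
Proof.
have hN : N = (n + n)%N by rewrite addnn.
have := ltn_ord i; have := ltn_ord c; rewrite -val_eqE /sig /sg /=.
by case: ifP => h1; case: ifP => h2 *; apply/eqP/eqP; lia.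
Qed.

Lemma sum1 (g : 'I_N -> C) (x : 'I_N) : \sum_r g r * (r == x)%:R = g x.
Proof.
rewrite (bigD1 x) //= eqxx mulr1 big1 ?addr0 // => r /negbTE ->.
by rewrite mulr0.
Qed.

Definition soJ (y : 'M[C]_N) := forall r c : 'I_N, y (sig c) (sig r) = - y r c.

Lemma so_decomp y : soJ y ->
  y = 2%:R^-1 *: \sum_(r < N) \sum_(c < N) y r c *: (E r.+1 c.+1 - E (sg c.+1) (sg r.+1)).
Proof.
move=> hy; apply/matrixP => i j; rewrite mxE summxE.
have e : forall r c : 'I_N, (y r c *: (E r.+1 c.+1 - E (sg c.+1) (sg r.+1))) i j =
   (y r c * (c == j)%:R) * (r == i)%:R - (y r c * (r == sig j)%:R) * (c == sig i)%:R.
  move=> r c; rewrite !mxE !eqSS sg_eq sg_eq.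
  rewrite -!mulnb !natrM !val_eqE (eq_sym i r) (eq_sym j c); ring.
under eq_bigr do rewrite summxE.
under eq_bigr do under eq_bigr do rewrite e.
under eq_bigr do rewrite sumrB -!mulr_suml sum1 sum1.
rewrite sumrB sum1 sum1 hy opprK.
have h2 : (2%:R : C) != 0 by rewrite pnatr_eq0.
by rewrite -[y i j + y i j]mulr2n -(mulr_natl (y i j) 2) mulrA mulVf ?mul1r.
Qed.

Lemma sgS (r : 'I_N) : (1 <= sg r.+1 <= N)%N.
Proof. have hN : N = (n + n)%N by rewrite addnn. have hr := ltn_ord r; rewrite /sg; case: ifP => h; apply/andP; split; lia. Qed.

Lemma so_span y : soJ y -> V k0 y.
Proof.
move=> hy; rewrite (so_decomp hy); apply: V_scale.
apply: V_sum => r _; apply: V_sum => c _; apply: V_scale.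
apply: VW; apply/andP; split; have := ltn_ord r; have := ltn_ord c; lia.
Qed.

Lemma sg_pos x : (0 < sg x)%N \/ x = 0%N.
Proof. rewrite /sg; case: ifP => h; lia. Qed.

Lemma sigS (r : 'I_N) : (sig r).+1 = sg r.+1.
Proof. by rewrite /= prednK //; case: (sg_pos r.+1). Qed.

Lemma sigK : involutive sig.
Proof.
have hN : N = (n + n)%N by rewrite addnn.
move=> r; apply: val_inj; apply: succn_inj.
change ((nat_of_ord (sig (sig r))).+1 = (nat_of_ord r).+1).
have hr := ltn_ord r.
rewrite !sigS; case: (leqP r.+1 n) => h.
  rewrite (sg_lo h) sg_hi; lia.
rewrite (sg_hi h) sg_lo; lia.
Qed.

Lemma sig_sym (r c : 'I_N) : (c == sig r) = (r == sig c).
Proof.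
apply/eqP/eqP => [->|->]; by rewrite sigK.
Qed.

Lemma sig_lt (r : 'I_N) : (sig r < n)%N = ~~ (r < n)%N.
Proof.
have hN : N = (n + n)%N by rewrite addnn.
have hr := ltn_ord r.
apply/idP/idP => h2; rewrite -ltnS sigS in h2 *; case: (leqP r.+1 n) => h.
- by move: h2; rewrite sg_lo //; lia.
- by move: h2; rewrite sg_hi //; lia.
- by rewrite sg_lo //; lia.
- by rewrite sg_hi //; lia.
Qed.

Definition Jm : 'M[C]_N := \matrix_(r, c) (c == sig r)%:R.

Lemma sumJ (g : 'I_N -> C) (x : 'I_N) : \sum_s (s == x)%:R * g s = g x.
Proof. by rewrite -[RHS](sum1 g x); apply: eq_bigr => s _; rewrite mulrC. Qed.

Lemma JmE (A : 'M[C]_N) r c : (Jm *m A) r c = A (sig r) c.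
Proof. by rewrite mxE; under eq_bigr do rewrite mxE; rewrite sumJ. Qed.

Lemma mJE (A : 'M[C]_N) r c : (A *m Jm) r c = A r (sig c).
Proof. by rewrite mxE; under eq_bigr do rewrite mxE sig_sym; rewrite sum1. Qed.

Lemma JJ : Jm *m Jm = 1%:M.
Proof.
apply/matrixP => r c; rewrite JmE !mxE sigK.
by rewrite eq_sym.
Qed.

Lemma JmT : Jm^T = Jm.
Proof. by apply/matrixP => r c; rewrite !mxE sig_sym. Qed.

Lemma soJ_mx y : soJ y <-> Jm *m y^T *m Jm = - y.
Proof.
split => h.
  by apply/matrixP => r c; rewrite mJE JmE !mxE h.
move=> r c; move/matrixP: h => /(_ r c); rewrite mJE JmE !mxE => ->.
done.
Qed.

Definition d1 (r : 'I_N) : C := if (r < n)%N then 1 else - 'i.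
Definition d2 (r : 'I_N) : C := if (r < n)%N then 1 else 'i.
Definition Qm : 'M[C]_N := \matrix_(r, c) (d1 r * (c == r)%:R + d2 r * (c == sig r)%:R).

Lemma QtQ : Qm^T *m Qm = 2%:R *: Jm.
Proof.
apply/matrixP => r c; rewrite !mxE.
have e : forall s, Qm^T r s * Qm s c =
   (s == r)%:R * (d1 s * Qm s c) + (s == sig r)%:R * (d2 s * Qm s c).
  by move=> s; rewrite !mxE (eq_sym r s) -sig_sym; ring.
under eq_bigr do rewrite e.
rewrite big_split /= !sumJ !mxE sigK.
have hsr := sig_lt r.
rewrite /d1 /d2 hsr.
have i2 : ('i : C) * 'i = -1 by rewrite -expr2 sqr_i.
by case: (r < n)%N; case: (c == r); case: (c == sig r); rewrite /= ?(mulrN, mulNr, mulr1, mul1r, mulr0, mul0r, addr0, add0r, i2, opprK, mulrDr); ring.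
Qed.

Definition Qi : 'M[C]_N := 2%:R^-1 *: (Jm *m Qm^T).

Lemma two_nz : (2%:R : C) != 0. Proof. by rewrite pnatr_eq0. Qed.

Lemma QiQ : Qi *m Qm = 1%:M.
Proof.
rewrite /Qi -scalemxAl -mulmxA QtQ -scalemxAr JJ scalerA mulVf ?scale1r //.
exact: two_nz.
Qed.

Lemma QQi : Qm *m Qi = 1%:M.
Proof. exact: mulmx1C QiQ. Qed.

Lemma QiT : Qi^T = 2%:R^-1 *: (Qm *m Jm).
Proof. by rewrite /Qi linearZ /= trmx_mul trmxK JmT. Qed.

Lemma conj_skew y : Jm *m y^T *m Jm = - y -> (Qm *m y *m Qi)^T = - (Qm *m y *m Qi).
Proof.
move=> h.
have h' : Jm *m y^T = - (y *m Jm).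
  by rewrite -[Jm *m y^T]mulmx1 -JJ mulmxA h mulNmx.
rewrite !trmx_mul QiT /Qi.
rewrite -scalemxAl -scalemxAr.
rewrite (mulmxA (Qm *m Jm)) -(mulmxA Qm Jm) h' mulmxN mulNmx.
by rewrite scalerN !mulmxA.
Qed.

Lemma conj_so z : z^T = - z -> Jm *m (Qi *m z *m Qm)^T *m Jm = - (Qi *m z *m Qm).
Proof.
move=> h.
rewrite !trmx_mul QiT h /Qi.
rewrite -?scalemxAl -?scalemxAr ?(mulNmx, mulmxN, scalerN).
rewrite -?scalemxAl -?scalemxAr ?(mulNmx, mulmxN, scalerN).
rewrite !mulmxA -(mulmxA _ Jm Jm) JJ mulmx1.
done.
Qed.

Definition soJm (y : 'M[C]_N) := Jm *m y^T *m Jm = - y.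

Lemma soJm_br X Y : soJm X -> soJm Y -> soJm (X *m Y - Y *m X).
Proof.
rewrite /soJm => hX hY.
have sp A B : Jm *m (A^T *m B^T) *m Jm = (Jm *m A^T *m Jm) *m (Jm *m B^T *m Jm).
  by rewrite !mulmxA -(mulmxA _ Jm Jm) JJ mulmx1.
rewrite linearB /= !trmx_mul mulmxBr mulmxBl sp sp hX hY.
by rewrite mulNmx mulmxN opprK mulNmx mulmxN opprK opprB.
Qed.

Lemma soJm_add X Y : soJm X -> soJm Y -> soJm (X + Y).
Proof. by rewrite /soJm => hX hY; rewrite linearD /= mulmxDr mulmxDl hX hY opprD. Qed.
Lemma soJm_scale c X : soJm X -> soJm (c *: X).
Proof. by rewrite /soJm => hX; rewrite linearZ /= -scalemxAr -scalemxAl hX scalerN. Qed.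
Lemma soJm0 : soJm 0.
Proof. by rewrite /soJm trmx0 mulmx0 mul0mx oppr0. Qed.

Lemma sg_sym x y : (1 <= x <= N)%N -> (1 <= y <= N)%N -> (sg x == y) = (x == sg y).
Proof.
have hN : N = (n + n)%N by rewrite addnn.
by move=> hx hy; rewrite /sg; case: ifP => h1; case: ifP => h2; apply/eqP/eqP; lia.
Qed.
Lemma sg_inj x y : (1 <= x <= N)%N -> (1 <= y <= N)%N -> (sg x == sg y) = (x == y).
Proof.
have hN : N = (n + n)%N by rewrite addnn.
by move=> hx hy; rewrite /sg; case: ifP => h1; case: ifP => h2; apply/eqP/eqP; lia.
Qed.

Lemma soJm_W i j : (1 <= i <= N)%N -> (1 <= j <= N)%N -> soJm (E i j - E (sg j) (sg i)).
Proof.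
move=> hi hj; apply/soJ_mx => r c.
have hr : (1 <= r.+1 <= N)%N by rewrite ltn_ord.
have hc : (1 <= c.+1 <= N)%N by rewrite ltn_ord.
rewrite !mxE !sigS (sg_sym hc hi) (sg_sym hr hj) (sg_inj hc hj) (sg_inj hr hi).
rewrite -!mulnb !natrM; ring.
Qed.

Lemma trE i j : i <> j -> \tr (E i j) = 0.
Proof.
move=> ij; rewrite /mxtrace big1 // => r _; rewrite mxE.
case: (r.+1 =P i) => [e1|]; last by [].
case: (r.+1 =P j) => [e2|]; last by [].
by exfalso; apply: ij; rewrite -e1 -e2.
Qed.

Definition Inv (x : tup R K N) := forall k : 'I_K,
  if val k == 0%N then soJm (x k) else \tr (x k) = 0.

Lemma gen_so i : (1 <= i <= n)%N ->
  [/\ soJm (psi_e n (-1) i), soJm (psi_f n (-1) i) & soJm (psi_h n (-1) i)].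
Proof.
have hN : N = (n + n)%N by rewrite addnn.
move=> /andP[i1 iN].
have rg' x : (1 <= x <= N)%N -> (1 <= x <= N)%N by [].
have he : soJm (psi_e n (-1) i).
  case: (ltnP i n) => h.
    rewrite psi_eU // /W.U.
    have h' := @soJm_W i i.+1 ltac:(apply/andP; split; lia) ltac:(apply/andP; split; lia).
    rewrite (@sg_lo i.+1) in h'; last lia.
    rewrite (@sg_lo i) in h'; last lia.
    by rewrite [(n + i.+1)%N]addnC [(n + i)%N]addnC.
  have -> : i = n by lia.
  rewrite psi_en invrN1 scaleN1r /W.B.
  have h' := @soJm_W n (n + 1) ltac:(apply/andP; split; lia) ltac:(apply/andP; split; lia).
  rewrite (@sg_hi (n + 1)) in h'; last lia.
  rewrite (@sg_lo n) in h'; last lia.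
  by rewrite addKn in h'.
have hf : soJm (psi_f n (-1) i).
  case: (ltnP i n) => h.
    rewrite psi_fU // /W.U.
    have h' := @soJm_W i.+1 i ltac:(apply/andP; split; lia) ltac:(apply/andP; split; lia).
    rewrite (@sg_lo i.+1) in h'; last lia.
    rewrite (@sg_lo i) in h'; last lia.
    by rewrite [(n + i.+1)%N]addnC [(n + i)%N]addnC.
  have -> : i = n by lia.
  rewrite psi_fn scaleN1r /W.Cm.
  have h' := @soJm_W (n + 1) n ltac:(apply/andP; split; lia) ltac:(apply/andP; split; lia).
  rewrite (@sg_hi (n + 1)) in h'; last lia.
  rewrite (@sg_lo n) in h'; last lia.
  by rewrite addKn in h'.
by split => //; apply: soJm_br.
Qed.

Lemma gen_tr (c : C) i : (1 <= i <= n)%N ->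
  [/\ \tr (psi_e n c i) = 0, \tr (psi_f n c i) = 0 & \tr (psi_h n c i) = 0].
Proof.
move=> /andP[i1 iN].
split; last by rewrite /psi_h linearB /= mxtrace_mulC subrr.
  case: (ltnP i n) => h.
    by rewrite psi_eU // /W.U linearB /= !trE ?subrr //; lia.
  have -> : i = n by lia.
  by rewrite psi_en /W.B linearD linearZ /= !trE ?mulr0 ?addr0 //; lia.
case: (ltnP i n) => h.
  by rewrite psi_fU // /W.U linearB /= !trE ?subrr //; lia.
have -> : i = n by lia.
by rewrite psi_fn /W.Cm linearD linearZ /= !trE ?mulr0 ?addr0 //; lia.
Qed.

Lemma inv_all x : psi_image a x -> Inv x.
Proof.
elim => {x}.
- move=> x [i hi] [] -> k; rewrite ffunE;
  (case: ifP => h; [rewrite hm1; last by apply/eqP|]);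
  by have [? ? ?] := gen_so hi; have [? ? ?] := gen_tr (a k) hi.
- by move=> k; rewrite ffunE; case: ifP => _; [exact: soJm0| exact: mxtrace0].
- move=> x y _ hx _ hy k; have := hx k; have := hy k; rewrite ffunE.
  case: ifP => _; first by move=> h1 h2; apply: soJm_add.
  by move=> h1 h2; rewrite mxtraceD h1 h2 addr0.
- move=> c x _ hx k; have := hx k; rewrite ffunE.
  case: ifP => _; first exact: soJm_scale.
  by move=> h1; rewrite mxtraceZ h1 mulr0.
- move=> x y _ hx _ hy k; have := hx k; have := hy k; rewrite ffunE.
  case: ifP => _; first by move=> h1 h2; apply: soJm_br.
  by move=> _ _; rewrite linearB /= mxtrace_mulC subrr.
Qed.

Definition fmap (x : tup R K N) : tup R K N :=
  [ffun k => if val k == 0%N then Qm *m x k *m Qi else x k].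

Lemma conjK X : Qi *m (Qm *m X *m Qi) *m Qm = X.
Proof. by rewrite !mulmxA QiQ mul1mx -mulmxA QiQ mulmx1. Qed.
Lemma conjK' X : Qm *m (Qi *m X *m Qm) *m Qi = X.
Proof. by rewrite !mulmxA QQi mul1mx -mulmxA QQi mulmx1. Qed.

Lemma main_iso : lie_iso (@psi_image R n K a) (@so_sl_sum R n K).
Proof.
exists fmap; split.
- move=> c x y _ _; apply/ffunP => k; rewrite !ffunE; case: ifP => _ //.
  by rewrite mulmxDr mulmxDl -(scalemxAr c Qm) -(scalemxAl c (Qm *m x k) Qi).
- move=> x y _ _; apply/ffunP => k; rewrite !ffunE; case: ifP => _ //.
  rewrite mulmxBr mulmxBl !mulmxA.
  by rewrite -(mulmxA _ Qi Qm) QiQ mulmx1 -(mulmxA _ Qi Qm) QiQ mulmx1.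
- move=> x hx k; have := inv_all hx k; rewrite ffunE.
  by case: ifP => _ // h; apply: conj_skew.
- move=> x y _ _ e; apply/ffunP => k; move/ffunP: e => /(_ k); rewrite !ffunE.
  case: ifP => _ // e.
  by rewrite -(conjK (x k)) e conjK.
move=> z hz.
pose x : tup R K N := [ffun k => if val k == 0%N then Qi *m z k *m Qm else z k].
exists x; last first.
  by apply/ffunP => k; rewrite /x !ffunE; case: ifP => h; rewrite h ?conjK'.
have hV : forall k, V k (x k).
  move=> k; have := hz k; rewrite /x ffunE; case: ifP => h hk.
    have ek : k = k0 by apply: val_inj; apply/eqP.
    rewrite ek in hk *.
    by apply: so_span; apply/soJ_mx; apply: conj_so.
  by apply: sl_span => // e; rewrite e in h.
have hs := @inL_sumseq (fun _ => true) (fun k => D k (x k)) (index_enum _) (fun k _ => hV k).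
have hx : inL (fun k => x k).
  apply: inL_ext hs => j.
  rewrite (bigD1 j) //= /D eqxx big1 ?addr0 // => k kj.
  by rewrite eq_sym (negbTE kj).
have E : [ffun k => x k] = x by apply/ffunP => k; rewrite ffunE.
by move: hx; rewrite /inL E.
Qed.

End Main.

Unset Implicit Arguments.

Theorem lemma5p4 (R : realType) (n K : nat) (a : 'I_K -> R[i]) :
  (3 <= n)%N -> (1 <= K)%N ->
  (forall k, a k != 0) ->
  (forall k j : 'I_K, k != j -> a k != a j /\ a k != (a j)^-1) ->
  (forall k : 'I_K, val k = 0%N -> a k = -1) ->
  (forall k : 'I_K, val k <> 0%N -> a k != 1) ->
  lie_iso (@psi_image R n K a) (@so_sl_sum R n K).
Proof.
move=> n3 hK ha0 hdist hm1 hne1.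
exact: (@main_iso R n K a n3 hK ha0 hdist hm1 hne1).
Qed.
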